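(* Let $d\ge2$, $k\in\mathbb{N}_0$, $Y_k$ a harmonic homogeneous polynomial of degree $k$ on $\mathbb{R}^d$, $\alpha\in\mathbb{R}$, and $H_{\alpha,k}(x)=|x|^{2\alpha}Y_k(x)$ on $\mathbb{R}^d\setminus\{0\}$. If $\alpha\in\mathbb{N}_0$ or $\alpha=1-\frac d2-k+j$ for some $j\in\mathbb{N}_0$, then $H_{\alpha,k}$ is polyharmonic of finite order (i.e. $\Delta^pH_{\alpha,k}=0$ for some $p$). If $\alpha$ is none of these numbers, then for $0<r_0<r_1\le\infty$ the restriction of $H_{\alpha,k}$ to $A(r_0,r_1)$ is polyharmonic of infinite order and type at most $1/r_0$.
   Context: $A(r_0,r_1)=\{x\in\mathbb{R}^d: r_0<|x|<r_1\}$. A function $f:G\to\mathbb{C}$ on a domain $G\subset\mathbb{R}^d$ is polyharmonic of infinite order and type $\tau\ge0$ if $f\in C^\infty(G)$ and for every compact $K\subset G$ and every $\varepsilon>0$ there is $C_{K,\varepsilon}>0$ with $\max_{x\in K}|\Delta^p f(x)|\le C_{K,\varepsilon}(2p)!(\tau+\varepsilon)^{2p}$ for all $p\in\mathbb{N}_0$. ''Type at most $1/r_0$'' means it is of type $1/r_0$ in this sense. *)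

(* Defs.v *)
From Stdlib Require Import Reals Lra List Arith ClassicalEpsilon.
Open Scope R_scope.

(* Points of R^d are modelled as sequences x : nat -> R; the space R^d is the
   set of those x with x i = 0 for all i >= d (coordinates 0..d-1). *)
Definition pt := nat -> R.

Definition in_Rd (d : nat) (x : pt) : Prop := forall i, (d <= i)%nat -> x i = 0.

Fixpoint sumd (n : nat) (f : nat -> R) : R :=
  match n with O => 0 | S m => sumd m f + f m end.
Fixpoint prodd (n : nat) (f : nat -> R) : R :=
  match n with O => 1 | S m => prodd m f * f m end.
Fixpoint sumdn (n : nat) (f : nat -> nat) : nat :=
  match n with O => O | S m => (sumdn m f + f m)%nat end.

Definition norm (d : nat) (x : pt) : R := sqrt (sumd d (fun i => x i ^ 2)).
Definition dist (d : nat) (x y : pt) : R := norm d (fun i => x i - y i).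

Definition upd (x : pt) (i : nat) (t : R) : pt :=
  fun j => if Nat.eqb j i then t else x j.

(* i-th partial derivative (the value of the limit, when it exists) *)
Definition pd (f : pt -> R) (i : nat) (x : pt) : R :=
  epsilon (inhabits 0)
    (fun l => derivable_pt_lim (fun t => f (upd x i t)) (x i) l).

Definition lap (d : nat) (f : pt -> R) : pt -> R :=
  fun x => sumd d (fun i => pd (pd f i) i x).
Definition lap_iter (d p : nat) (f : pt -> R) : pt -> R := Nat.iter p (lap d) f.

Definition open_Rd (d : nat) (U : pt -> Prop) : Prop :=
  forall x, U x -> in_Rd d x ->
    exists r, 0 < r /\ forall y, in_Rd d y -> dist d x y < r -> U y.

Definition compact (d : nat) (K : pt -> Prop) : Prop :=
  (forall x, K x -> in_Rd d x) /\
  forall (I : Type) (U : I -> pt -> Prop),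
    (forall i, open_Rd d (U i)) ->
    (forall x, K x -> exists i, U i x) ->
    exists l : list I, forall x, K x -> exists i, In i l /\ U i x.

Definition cont_on (d : nat) (f : pt -> R) (G : pt -> Prop) : Prop :=
  forall x, G x -> forall eps, 0 < eps -> exists delta, 0 < delta /\
    forall y, in_Rd d y -> dist d x y < delta -> Rabs (f y - f x) < eps.
Fixpoint Ck (d n : nat) (f : pt -> R) (G : pt -> Prop) {struct n} : Prop :=
  match n with
  | O => cont_on d f G
  | S m => cont_on d f G /\
           forall i, (i < d)%nat ->
             (forall x, G x -> exists l,
                derivable_pt_lim (fun t => f (upd x i t)) (x i) l) /\
             Ck d m (pd f i) G
  end.
Definition smooth (d : nat) (f : pt -> R) (G : pt -> Prop) : Prop :=
  forall n, Ck d n f G.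

(* complex numbers as pairs (real part, imaginary part) *)
Definition cabs (z : R * R) : R := sqrt (fst z ^ 2 + snd z ^ 2).
Definition re (f : pt -> R * R) : pt -> R := fun x => fst (f x).
Definition im (f : pt -> R * R) : pt -> R := fun x => snd (f x).

Definition polyharmonic_inf (d : nat) (f : pt -> R * R) (G : pt -> Prop)
    (tau : R) : Prop :=
  smooth d (re f) G /\ smooth d (im f) G /\
  forall K, compact d K -> (forall x, K x -> G x) ->
  forall eps, 0 < eps -> exists C, 0 < C /\
    forall (p : nat) x, K x ->
      cabs (lap_iter d p (re f) x, lap_iter d p (im f) x)
        <= C * INR (fact (2 * p)) * (tau + eps) ^ (2 * p).

Definition polyharmonic_fin (d : nat) (f : pt -> R * R) (G : pt -> Prop) : Prop :=
  smooth d (re f) G /\ smooth d (im f) G /\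
  exists p : nat, forall x, G x ->
    lap_iter d p (re f) x = 0 /\ lap_iter d p (im f) x = 0.

Definition hom_poly (d k : nat) (P : pt -> R) : Prop :=
  exists l : list (R * (nat -> nat)),
    (forall m, In m l -> sumdn d (snd m) = k) /\
    forall x, P x = fold_right
      (fun m acc => fst m * prodd d (fun i => x i ^ (snd m i)) + acc) 0 l.

Definition harmonic_hom_poly (d k : nat) (Y : pt -> R * R) : Prop :=
  hom_poly d k (re Y) /\ hom_poly d k (im Y) /\
  forall x, in_Rd d x -> lap d (re Y) x = 0 /\ lap d (im Y) x = 0.

Definition Hak (d : nat) (alpha : R) (Y : pt -> R * R) : pt -> R * R :=
  fun x => (Rpower (norm d x) (2 * alpha) * fst (Y x),
            Rpower (norm d x) (2 * alpha) * snd (Y x)).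

Definition punctured (d : nat) : pt -> Prop :=
  fun x => in_Rd d x /\ norm d x <> 0.

(* annulus A(r0, r1); r1 = None stands for +infinity *)
Definition annulus (d : nat) (r0 : R) (r1 : option R) : pt -> Prop :=
  fun x => in_Rd d x /\ r0 < norm d x /\
    match r1 with Some r => norm d x < r | None => True end.

Definition ext_lt (r0 : R) (r1 : option R) : Prop :=
  match r1 with Some r => r0 < r | None => True end.

Definition exceptional (d k : nat) (alpha : R) : Prop :=
  (exists n : nat, alpha = INR n) \/
  (exists j : nat, alpha = 1 - INR d / 2 - INR k + INR j).

(* Main.v *)
From Stdlib Require Import Reals Lra Lia Arith List FunctionalExtensionality
  PropExtensionality ClassicalEpsilon.
Require Import Defs.
Open Scope R_scope.

Lemma sumd_ext n f g : (forall i, (i < n)%nat -> f i = g i) -> sumd n f = sumd n g.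
Proof. induction n; simpl; intros H; auto. rewrite IHn by (intros; apply H; lia). rewrite H by lia; auto. Qed.

Lemma sumd_plus n f g : sumd n (fun i => f i + g i) = sumd n f + sumd n g.
Proof. induction n; simpl; [ring|rewrite IHn; ring]. Qed.

Lemma sumd_scal n c f : sumd n (fun i => c * f i) = c * sumd n f.
Proof. induction n; simpl; [ring|rewrite IHn; ring]. Qed.

Lemma sumd_const n c : sumd n (fun _ => c) = INR n * c.
Proof. induction n; simpl sumd; [simpl; ring|rewrite IHn, S_INR; ring]. Qed.

Lemma sumd_nonneg n f : (forall i, 0 <= f i) -> 0 <= sumd n f.
Proof. induction n; simpl; intros H; [lra| pose proof (H n); specialize (IHn H); lra]. Qed.

Lemma sumd_ge_term n f i : (forall j, 0 <= f j) -> (i < n)%nat -> f i <= sumd n f.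
Proof.
  induction n; intros H Hi; [lia|]. simpl.
  destruct (Nat.eq_dec i n).
  - subst. pose proof (sumd_nonneg n f H). lra.
  - assert (f i <= sumd n f) by (apply IHn; auto; lia). specialize (H n). lra.
Qed.

Lemma sumd_single n f i : (forall j, j <> i -> f j = 0) -> (i < n)%nat -> sumd n f = f i.
Proof.
  induction n; intros H Hi; [lia|]. simpl.
  destruct (Nat.eq_dec i n).
  - subst. rewrite (sumd_ext n f (fun _ => 0)). rewrite sumd_const. ring.
    intros j Hj. apply H. lia.
  - rewrite IHn by (auto; lia). rewrite (H n) by auto. ring.
Qed.

Definition Nf (d : nat) (x : pt) : R := sumd d (fun i => x i ^ 2).

Lemma Nf_nonneg d x : 0 <= Nf d x.
Proof. apply sumd_nonneg. intros; apply pow2_ge_0. Qed.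

Lemma norm_Nf d x : norm d x = sqrt (Nf d x).
Proof. reflexivity. Qed.

Lemma upd_eq x i t : upd x i t i = t.
Proof. unfold upd. rewrite Nat.eqb_refl. auto. Qed.
Lemma upd_neq x i t j : j <> i -> upd x i t j = x j.
Proof. intros H. unfold upd. destruct (Nat.eqb_spec j i); congruence. Qed.
Lemma upd_same x i : upd x i (x i) = x.
Proof. apply functional_extensionality. intros j. unfold upd. destruct (Nat.eqb_spec j i); subst; auto. Qed.

Lemma in_Rd_upd d x i t : (i < d)%nat -> in_Rd d x -> in_Rd d (upd x i t).
Proof. intros Hi Hx j Hj. rewrite upd_neq by lia. auto. Qed.

Lemma dist_upd d x i t : (i < d)%nat -> dist d x (upd x i t) = Rabs (t - x i).
Proof.
  intros Hi. unfold dist, norm.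
  rewrite (sumd_single d _ i). rewrite upd_eq.
  replace ((x i - t) ^ 2) with (Rsqr (t - x i)) by (unfold Rsqr; ring).
  apply sqrt_Rsqr_abs.
  intros j Hj. rewrite upd_neq by auto. ring. auto.
Qed.

Lemma coord_le_dist d x y i : (i < d)%nat -> Rabs (y i - x i) <= dist d x y.
Proof.
  intros Hi. unfold dist, norm.
  rewrite <- sqrt_Rsqr_abs. apply sqrt_le_1.
  apply Rle_0_sqr. apply sumd_nonneg. intros; apply pow2_ge_0.
  replace (Rsqr (y i - x i)) with ((fun j => (x j - y j) ^ 2) i) by (simpl; unfold Rsqr; ring).
  apply (sumd_ge_term d (fun j => (x j - y j) ^ 2) i); auto. intros; apply pow2_ge_0.
Qed.

Definition cont_at (d : nat) (F : pt -> R) (x : pt) : Prop :=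
  forall eps, 0 < eps -> exists delta, 0 < delta /\
    forall y, in_Rd d y -> dist d x y < delta -> Rabs (F y - F x) < eps.

Lemma cont_const d c x : cont_at d (fun _ => c) x.
Proof. intros e He. exists 1. split; [lra|]. intros. rewrite Rminus_diag, Rabs_R0. auto. Qed.

Lemma cont_coord d i x : in_Rd d x -> cont_at d (fun y => y i) x.
Proof.
  intros Hx e He. exists e. split; auto. intros y Hy Hd.
  destruct (Nat.lt_ge_cases i d).
  - pose proof (coord_le_dist d x y i H). lra.
  - rewrite Hx, Hy by auto. rewrite Rminus_diag, Rabs_R0. auto.
Qed.

Lemma cont_plus d f g x : cont_at d f x -> cont_at d g x -> cont_at d (fun y => f y + g y) x.
Proof.
  intros Hf Hg e He.
  destruct (Hf (e/2)) as [d1 [Hd1 H1]]; [lra|].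
  destruct (Hg (e/2)) as [d2 [Hd2 H2]]; [lra|].
  exists (Rmin d1 d2). split; [apply Rmin_pos; auto|].
  intros y Hy Hd. specialize (H1 y Hy). specialize (H2 y Hy).
  assert (dist d x y < d1) by (pose proof (Rmin_l d1 d2); lra).
  assert (dist d x y < d2) by (pose proof (Rmin_r d1 d2); lra).
  specialize (H1 H). specialize (H2 H0).
  replace (f y + g y - (f x + g x)) with ((f y - f x) + (g y - g x)) by ring.
  pose proof (Rabs_triang (f y - f x) (g y - g x)). lra.
Qed.

Lemma cont_mult d f g x : cont_at d f x -> cont_at d g x -> cont_at d (fun y => f y * g y) x.
Proof.
  intros Hf Hg e He.
  set (K := 1 + Rabs (f x) + Rabs (g x)).
  assert (HK : 1 <= K) by (unfold K; pose proof (Rabs_pos (f x)); pose proof (Rabs_pos (g x)); lra).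
  set (e1 := Rmin 1 (e / (3 * K))).
  assert (He1 : 0 < e1). { unfold e1. apply Rmin_pos; [lra|]. apply Rdiv_lt_0_compat; lra. }
  assert (He1b : e1 <= e / (3*K)) by apply Rmin_r.
  assert (He1c : e1 <= 1) by apply Rmin_l.
  destruct (Hf e1 He1) as [d1 [Hd1 H1]].
  destruct (Hg e1 He1) as [d2 [Hd2 H2]].
  exists (Rmin d1 d2). split; [apply Rmin_pos; auto|].
  intros y Hy Hd. specialize (H1 y Hy). specialize (H2 y Hy).
  assert (dist d x y < d1) by (pose proof (Rmin_l d1 d2); lra).
  assert (dist d x y < d2) by (pose proof (Rmin_r d1 d2); lra).
  specialize (H1 H). specialize (H2 H0).
  replace (f y * g y - f x * g x) with ((f y - f x) * (g y - g x) + f x * (g y - g x) + g x * (f y - f x)) by ring.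
  assert (e1 * K <= e / 3).
  { apply (Rmult_le_compat_r K) in He1b; [|lra].
    replace (e / (3 * K) * K) with (e/3) in He1b by (field; lra). lra. }
  eapply Rle_lt_trans. apply Rabs_triang.
  eapply Rle_lt_trans. apply Rplus_le_compat_r. apply Rabs_triang.
  rewrite !Rabs_mult.
  pose proof (Rabs_pos (f y - f x)). pose proof (Rabs_pos (g y - g x)).
  pose proof (Rabs_pos (f x)). pose proof (Rabs_pos (g x)).
  assert (Rabs (f y - f x) * Rabs (g y - g x) <= e1 * e1) by (apply Rmult_le_compat; lra).
  assert (Rabs (f x) * Rabs (g y - g x) <= Rabs (f x) * e1) by (apply Rmult_le_compat_l; lra).
  assert (Rabs (g x) * Rabs (f y - f x) <= Rabs (g x) * e1) by (apply Rmult_le_compat_l; lra).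
  assert (e1 * e1 <= e1) by nra.
  assert (e1 * e1 + Rabs (f x) * e1 + Rabs (g x) * e1 <= e1 * K) by (unfold K; nra).
  assert (e1 * e1 + Rabs (f x) * e1 + Rabs (g x) * e1 < e).
  { assert (e1 * e1 + Rabs (f x) * e1 + Rabs (g x) * e1 <= e/3) by lra. lra. }
  assert (Rabs (f y - f x) * Rabs (g y - g x) < e1 * e1 \/ True) by auto.
  lra.
Qed.

Lemma cont_comp d f h x : cont_at d f x -> continuity_pt h (f x) -> cont_at d (fun y => h (f y)) x.
Proof.
  intros Hf Hh e He.
  destruct (Hh e He) as [a [Ha H]].
  destruct (Hf a Ha) as [b [Hb Hb2]].
  exists b. split; auto. intros y Hy Hd.
  specialize (Hb2 y Hy Hd).
  destruct (Req_dec (f y) (f x)) as [E|E].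
  - rewrite E, Rminus_diag, Rabs_R0. auto.
  - apply (H (f y)). split. split. exact I. auto. simpl. unfold R_dist. auto.
Qed.
Inductive ex : Type :=
| Cst (c : R) | Crd (i : nat) | Np (b : R) | Add (e1 e2 : ex) | Mul (e1 e2 : ex).

Fixpoint eval (d : nat) (e : ex) (x : pt) : R :=
  match e with
  | Cst c => c
  | Crd i => x i
  | Np b => Rpower (Nf d x) b
  | Add e1 e2 => eval d e1 x + eval d e2 x
  | Mul e1 e2 => eval d e1 x * eval d e2 x
  end.

Fixpoint deriv (i : nat) (e : ex) : ex :=
  match e with
  | Cst _ => Cst 0
  | Crd j => Cst (if Nat.eqb j i then 1 else 0)
  | Np b => Mul (Cst (2 * b)) (Mul (Crd i) (Np (b - 1)))
  | Add e1 e2 => Add (deriv i e1) (deriv i e2)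
  | Mul e1 e2 => Add (Mul (deriv i e1) e2) (Mul e1 (deriv i e2))
  end.

Lemma Nf_upd_deriv n x i :
  derivable_pt_lim (fun t => sumd n (fun j => upd x i t j ^ 2)) (x i)
    (if Nat.ltb i n then 2 * x i else 0).
Proof.
  induction n; simpl.
  - apply derivable_pt_lim_const.
  - replace (if Nat.ltb i (S n) then 2 * x i else 0) with
      ((if Nat.ltb i n then 2 * x i else 0) + (if Nat.eqb n i then 2 * x i else 0)).
    + apply (derivable_pt_lim_plus (fun t => sumd n (fun j => upd x i t j ^ 2))
          (fun t => upd x i t n ^ 2)); auto.
      unfold upd. destruct (Nat.eqb_spec n i).
      * subst. replace (2 * x i) with (INR 2 * x i ^ (2 - 1) * 1) by (simpl; ring).
        apply (derivable_pt_lim_comp id (fun t => t ^ 2)). apply derivable_pt_lim_id.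
        apply derivable_pt_lim_pow.
      * apply derivable_pt_lim_const.
    + destruct (Nat.ltb_spec i n); destruct (Nat.ltb_spec i (S n)); destruct (Nat.eqb_spec n i); try lia; ring.
Qed.

Lemma eval_deriv d e x i :
  (i < d)%nat -> 0 < Nf d x ->
  derivable_pt_lim (fun t => eval d e (upd x i t)) (x i) (eval d (deriv i e) x).
Proof.
  intros Hi HN. induction e; simpl.
  - apply derivable_pt_lim_const.
  - unfold upd. destruct (Nat.eqb_spec i0 i).
    + apply derivable_pt_lim_id.
    + apply derivable_pt_lim_const.
  - unfold Nf.
    pose proof (Nf_upd_deriv d x i) as H. destruct (Nat.ltb_spec i d); [|lia].
    assert (HN' : 0 < sumd d (fun j => upd x i (x i) j ^ 2)) by (rewrite upd_same; exact HN).
    pose proof (derivable_pt_lim_comp _ _ _ _ _ H (derivable_pt_lim_power _ b HN')) as H2.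
    unfold comp in H2. rewrite upd_same in H2.
    replace (2 * b * (x i * Rpower (sumd d (fun i1 => x i1 ^ 2)) (b - 1)))
      with (b * Rpower (sumd d (fun i1 => x i1 ^ 2)) (b - 1) * (2 * x i)) by ring.
    exact H2.
  - apply (derivable_pt_lim_plus (fun t => eval d e1 (upd x i t)) (fun t => eval d e2 (upd x i t))); auto.
  - pose proof (derivable_pt_lim_mult (fun t => eval d e1 (upd x i t)) (fun t => eval d e2 (upd x i t)) _ _ _ IHe1 IHe2) as H.
    cbv beta in H. rewrite upd_same in H. exact H.
Qed.

Lemma cont_coord_lt d i x : (i < d)%nat -> cont_at d (fun y => y i) x.
Proof.
  intros Hi e He. exists e. split; auto. intros y Hy Hd.
  pose proof (coord_le_dist d x y i Hi). lra.
Qed.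

Lemma cont_Nf d x : cont_at d (Nf d) x.
Proof.
  unfold Nf. assert (forall n, (n <= d)%nat -> cont_at d (fun y => sumd n (fun i => y i ^ 2)) x).
  { induction n; intros Hn; simpl.
  - apply cont_const.
  - apply (cont_plus d (fun y => sumd n (fun i => y i ^ 2)) (fun y => y n ^ 2)); [apply IHn; lia|].
    apply (cont_mult d (fun y => y n) (fun y => y n * 1)). apply cont_coord_lt; lia.
    apply (cont_mult d (fun y => y n) (fun y => 1)). apply cont_coord_lt; lia. apply cont_const. }
  apply H; lia.
Qed.

Lemma cont_eval d e x : in_Rd d x -> 0 < Nf d x -> cont_at d (eval d e) x.
Proof.
  intros Hx HN. induction e; simpl.
  - apply cont_const.
  - apply cont_coord; auto.
  - apply (cont_comp d (Nf d) (fun z => Rpower z b)). apply cont_Nf.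
    apply derivable_continuous_pt. exists (b * Rpower (Nf d x) (b - 1)).
    apply derivable_pt_lim_power; auto.
  - apply cont_plus; auto.
  - apply cont_mult; auto.
Qed.
Lemma punct_iff d x : punctured d x <-> in_Rd d x /\ 0 < Nf d x.
Proof.
  unfold punctured. rewrite norm_Nf. pose proof (Nf_nonneg d x). split; intros [H1 H2]; split; auto.
  - destruct H; auto. exfalso. apply H2. rewrite <- H. apply sqrt_0.
  - apply Rgt_not_eq. apply sqrt_lt_R0. auto.
Qed.

Lemma punct_nbhd d x : punctured d x -> exists r, 0 < r /\
  forall y, in_Rd d y -> dist d x y < r -> punctured d y.
Proof.
  intros Hx. apply punct_iff in Hx. destruct Hx as [Hx HN].
  destruct (cont_Nf d x (Nf d x) HN) as [r [Hr H]]. exists r. split; auto.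
  intros y Hy Hd. apply punct_iff. split; auto. specialize (H y Hy Hd).
  apply Rabs_def2 in H. lra.
Qed.

Lemma local_deriv (f g : R -> R) a l r : 0 < r -> (forall t, Rabs (t - a) < r -> f t = g t) ->
  derivable_pt_lim f a l -> derivable_pt_lim g a l.
Proof.
  intros Hr Hfg Hf e He. destruct (Hf e He) as [del Hdel].
  assert (Hm : 0 < Rmin del r) by (apply Rmin_pos; [apply cond_pos|auto]).
  exists (mkposreal _ Hm). intros h Hh Hhd. simpl in Hhd.
  rewrite <- !Hfg. apply Hdel; auto. pose proof (Rmin_l del r); lra.
  rewrite Rminus_diag, Rabs_R0; auto.
  replace (a + h - a) with h by ring. pose proof (Rmin_r del r); lra.
Qed.

Lemma line_punct d x i r : (i < d)%nat -> in_Rd d x ->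
  (forall y, in_Rd d y -> dist d x y < r -> punctured d y) ->
  forall t, Rabs (t - x i) < r -> punctured d (upd x i t).
Proof.
  intros Hi Hx H t Ht. apply H. apply in_Rd_upd; auto. rewrite dist_upd; auto.
Qed.

Lemma pd_local d f g i y : (i < d)%nat -> punctured d y ->
  (forall z, punctured d z -> f z = g z) -> pd f i y = pd g i y.
Proof.
  intros Hi Hy Hfg. unfold pd. f_equal. apply functional_extensionality; intro l.
  destruct (punct_nbhd d y Hy) as [r [Hr Hn]].
  assert (Hyr : in_Rd d y) by (destruct Hy; auto).
  apply propositional_extensionality; split; apply local_deriv with r; auto;
    intros t Ht; [|symmetry]; apply Hfg; eapply line_punct; eauto.
Qed.

Lemma pd_eval d e i x : (i < d)%nat -> punctured d x -> pd (eval d e) i x = eval d (deriv i e) x.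
Proof.
  intros Hi Hx. apply punct_iff in Hx. destruct Hx as [Hx HN].
  pose proof (eval_deriv d e x i Hi HN) as H.
  unfold pd.
  exact (uniqueness_limite _ _ _ _ (epsilon_spec (inhabits 0) (fun l => derivable_pt_lim (fun t => eval d e (upd x i t)) (x i) l) (ex_intro _ _ H)) H).
Qed.

Lemma Ck_mono d n f (G G' : pt -> Prop) : (forall x, G' x -> G x) -> Ck d n f G -> Ck d n f G'.
Proof.
  revert f. induction n; simpl; intros f HG H.
  - intros x Hx. apply H. auto.
  - destruct H as [H1 H2]. split.
    + intros x Hx. apply H1. auto.
    + intros i Hi. destruct (H2 i Hi) as [H3 H4]. split.
      * intros x Hx. apply H3; auto.
      * apply IHn; auto.
Qed.

Lemma Ck_local d n f g : (forall z, punctured d z -> f z = g z) ->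
  Ck d n f (punctured d) -> Ck d n g (punctured d).
Proof.
  revert f g. induction n; simpl; intros f g Hfg H.
  - intros x Hx e He. destruct (H x Hx e He) as [del [Hdel H1]].
    destruct (punct_nbhd d x Hx) as [r [Hr Hn]].
    exists (Rmin del r). split; [apply Rmin_pos; auto|].
    intros y Hy Hd. rewrite <- !Hfg; auto. apply H1; auto. pose proof (Rmin_l del r); lra.
    apply Hn; auto. pose proof (Rmin_r del r); lra.
  - destruct H as [H1 H2]. split.
    + intros x Hx e He. destruct (H1 x Hx e He) as [del [Hdel H3]].
      destruct (punct_nbhd d x Hx) as [r [Hr Hn]].
      exists (Rmin del r). split; [apply Rmin_pos; auto|].
      intros y Hy Hd. rewrite <- !Hfg; auto. apply H3; auto. pose proof (Rmin_l del r); lra.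
      apply Hn; auto. pose proof (Rmin_r del r); lra.
    + intros i Hi. destruct (H2 i Hi) as [H3 H4]. split.
      * intros x Hx. destruct (H3 x Hx) as [l Hl]. exists l.
        destruct (punct_nbhd d x Hx) as [r [Hr Hn]].
        apply local_deriv with (f := fun t => f (upd x i t)) (r := r); auto.
        intros t Ht. apply Hfg. apply (line_punct d x i r); auto. destruct Hx; auto.
      * apply (IHn (pd f i)); auto. intros z Hz. apply (pd_local d); auto.
Qed.

Lemma Ck_eval d n e : Ck d n (eval d e) (punctured d).
Proof.
  revert e. induction n; simpl; intros e.
  - intros x Hx. apply punct_iff in Hx. destruct Hx. apply cont_eval; auto.
  - split.
    + intros x Hx. apply punct_iff in Hx. destruct Hx. apply cont_eval; auto.
    + intros i Hi. split.
      * intros x Hx. apply punct_iff in Hx. destruct Hx. exists (eval d (deriv i e) x).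
        apply eval_deriv; auto.
      * apply (Ck_local d n (eval d (deriv i e))); auto.
        intros z Hz. symmetry. apply pd_eval; auto.
Qed.

Lemma lap_local d f g x : punctured d x -> (forall z, punctured d z -> f z = g z) ->
  lap d f x = lap d g x.
Proof.
  intros Hx Hfg. unfold lap. apply sumd_ext. intros i Hi.
  apply (pd_local d); auto. intros z Hz. apply (pd_local d); auto.
Qed.

Lemma lap_iter_local d p f g x : punctured d x -> (forall z, punctured d z -> f z = g z) ->
  lap_iter d p f x = lap_iter d p g x.
Proof.
  revert x. induction p; intros x Hx Hfg; simpl; auto.
  apply lap_local; auto.
Qed.

Lemma lap_eval d e x : punctured d x ->
  lap d (eval d e) x = sumd d (fun i => eval d (deriv i (deriv i e)) x).
Proof.
  intros Hx. unfold lap. apply sumd_ext. intros i Hi.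
  rewrite (pd_local d (pd (eval d e) i) (eval d (deriv i e))); auto.
  apply pd_eval; auto. intros z Hz. apply pd_eval; auto.
Qed.
Lemma Rpower_shift n b : 0 < n -> Rpower n (b - 1 - 1) * n = Rpower n (b - 1).
Proof.
  intros Hn. rewrite <- (Rpower_1 n) at 2 by auto. rewrite <- Rpower_plus. f_equal. ring.
Qed.

Lemma lap_formula d P c b kk x : punctured d x ->
  sumd d (fun i => x i * eval d (deriv i P) x) = kk * eval d P x ->
  sumd d (fun i => eval d (deriv i (deriv i P)) x) = 0 ->
  sumd d (fun i => eval d (deriv i (deriv i (Mul (Cst c) (Mul (Np b) P)))) x) =
  c * (2 * b * (2 * b + INR d - 2 + 2 * kk)) * (Rpower (Nf d x) (b - 1) * eval d P x).
Proof.
  intros Hx HE HH. apply punct_iff in Hx. destruct Hx as [Hx HN].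
  set (n := Nf d x). set (R0 := Rpower n b). set (R1 := Rpower n (b - 1)).
  set (R2 := Rpower n (b - 1 - 1)). set (Pv := eval d P x).
  rewrite (sumd_ext d _ (fun i => (c * 2 * b * R1 * Pv) * 1 + (c * 2 * b * 2 * (b - 1) * R2 * Pv) * (x i ^ 2)
       + (c * 4 * b * R1) * (x i * eval d (deriv i P) x) + (c * R0) * eval d (deriv i (deriv i P)) x)).
  2:{ intros i Hi. simpl. rewrite Nat.eqb_refl. unfold R0, R1, R2, n, Pv. ring. }
  rewrite !sumd_plus, !sumd_scal, sumd_const, HE, HH.
  fold (Nf d x). fold n.
  assert (R2 * n = R1) by (apply Rpower_shift; auto).
  replace (c * 2 * b * 2 * (b - 1) * R2 * Pv * n) with (c * 2 * b * 2 * (b - 1) * Pv * (R2 * n)) by ring.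
  rewrite H. unfold Pv, R0, R1, R2, n. ring.
Qed.
Definition cfac (d : nat) (kk al : R) (i : nat) : R :=
  2 * (al - INR i) * (2 * (al - INR i) + INR d - 2 + 2 * kk).
Definition cp (d : nat) (kk al : R) (p : nat) : R := prodd p (cfac d kk al).

Lemma lap_iter_formula d P al kk :
  (forall x, punctured d x -> sumd d (fun i => x i * eval d (deriv i P) x) = kk * eval d P x) ->
  (forall x, punctured d x -> sumd d (fun i => eval d (deriv i (deriv i P)) x) = 0) ->
  forall p x, punctured d x ->
    lap_iter d p (eval d (Mul (Np al) P)) x = cp d kk al p * (Rpower (Nf d x) (al - INR p) * eval d P x).
Proof.
  intros HE HH p. induction p; intros x Hx.
  - unfold lap_iter, cp. simpl. replace (al - 0) with al by ring. ring.
  - unfold lap_iter. simpl Nat.iter. fold (lap_iter d p (eval d (Mul (Np al) P))).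
    rewrite (lap_local d _ (eval d (Mul (Cst (cp d kk al p)) (Mul (Np (al - INR p)) P)))); auto.
    rewrite lap_eval by auto. rewrite (lap_formula d P _ _ kk); auto.
    unfold cp at 2. simpl prodd. fold (cp d kk al p). unfold cfac.
    rewrite S_INR. replace (al - (INR p + 1)) with (al - INR p - 1) by ring. ring.
Qed.

Lemma cp_zero d kk al p i : (i < p)%nat -> cfac d kk al i = 0 -> cp d kk al p = 0.
Proof.
  unfold cp. induction p; intros Hi H; [lia|]. simpl.
  destruct (Nat.eq_dec i p). subst. rewrite H. ring. rewrite IHp by (auto; lia). ring.
Qed.
Fixpoint powe (e : ex) (a : nat) : ex :=
  match a with O => Cst 1 | S a' => Mul (powe e a') e end.
Fixpoint mon (n : nat) (m : nat -> nat) : ex :=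
  match n with O => Cst 1 | S n' => Mul (mon n' m) (powe (Crd n') (m n')) end.
Definition Pexpr (d : nat) (l : list (R * (nat -> nat))) : ex :=
  fold_right (fun mm acc => Add (Mul (Cst (fst mm)) (mon d (snd mm))) acc) (Cst 0) l.

Definition eul (d : nat) (e : ex) (kk : R) : Prop :=
  forall x, sumd d (fun i => x i * eval d (deriv i e) x) = kk * eval d e x.

Lemma eul_cst d c : eul d (Cst c) 0.
Proof. intros x. simpl. rewrite (sumd_ext d _ (fun i => 0 * x i)) by (intros; ring).
  rewrite sumd_scal. ring. Qed.

Lemma eul_crd d j : (j < d)%nat -> eul d (Crd j) 1.
Proof. intros Hj x. simpl. rewrite (sumd_single d _ j). rewrite Nat.eqb_refl. ring.
  intros i Hi. destruct (Nat.eqb_spec j i); [congruence|ring]. auto. Qed.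

Lemma eul_add d e1 e2 k : eul d e1 k -> eul d e2 k -> eul d (Add e1 e2) k.
Proof. intros H1 H2 x. simpl.
  rewrite (sumd_ext d _ (fun i => x i * eval d (deriv i e1) x + x i * eval d (deriv i e2) x)) by (intros; ring).
  rewrite sumd_plus, H1, H2. ring. Qed.

Lemma eul_mul d e1 e2 k1 k2 : eul d e1 k1 -> eul d e2 k2 -> eul d (Mul e1 e2) (k1 + k2).
Proof. intros H1 H2 x. simpl.
  rewrite (sumd_ext d _ (fun i => eval d e2 x * (x i * eval d (deriv i e1) x) + eval d e1 x * (x i * eval d (deriv i e2) x))) by (intros; ring).
  rewrite sumd_plus, !sumd_scal, H1, H2. ring. Qed.

Lemma eul_powe d e k a : eul d e k -> eul d (powe e a) (INR a * k).
Proof. intros H. induction a; simpl powe.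
  - replace (INR 0 * k) with 0 by (simpl; ring). apply eul_cst.
  - replace (INR (S a) * k) with (INR a * k + k) by (rewrite S_INR; ring). apply eul_mul; auto. Qed.

Lemma eul_mon d n m : (n <= d)%nat -> eul d (mon n m) (INR (sumdn n m)).
Proof. induction n; intros Hn; simpl.
  - apply eul_cst.
  - rewrite plus_INR. apply eul_mul. apply IHn; lia.
    replace (INR (m n)) with (INR (m n) * 1) by ring. apply eul_powe. apply eul_crd; lia. Qed.

Lemma eul_P d k l : (forall mm, In mm l -> sumdn d (snd mm) = k) -> eul d (Pexpr d l) (INR k).
Proof. induction l; intros H; simpl.
  - replace (INR k) with (INR k * 1) by ring.
    intros x. simpl. rewrite (sumd_ext d _ (fun i => 0 * x i)) by (intros; ring). rewrite sumd_scal. ring.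
  - apply eul_add; [|apply IHl; intros; apply H; simpl; auto].
    replace (INR k) with (0 + INR k) by ring. apply eul_mul. apply eul_cst.
    rewrite <- (H a) by (simpl; auto). apply eul_mon; auto. Qed.

Lemma eval_powe d e a x : eval d (powe e a) x = eval d e x ^ a.
Proof. induction a; simpl; auto. rewrite IHa. ring. Qed.

Lemma eval_mon d n m x : eval d (mon n m) x = prodd n (fun i => x i ^ m i).
Proof. induction n; simpl; auto. rewrite IHn, eval_powe. auto. Qed.

Lemma eval_P d l x : eval d (Pexpr d l) x =
  fold_right (fun m acc => fst m * prodd d (fun i => x i ^ (snd m i)) + acc) 0 l.
Proof. induction l; simpl; auto. rewrite IHl, eval_mon. auto. Qed.

Lemma poly_component d k (f : pt -> R) :
  hom_poly d k f -> (forall x, in_Rd d x -> lap d f x = 0) ->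
  exists P, (forall x, f x = eval d P x) /\ eul d P (INR k) /\
    (forall x, punctured d x -> sumd d (fun i => eval d (deriv i (deriv i P)) x) = 0).
Proof.
  intros [l [Hdeg Hf]] Hlap. exists (Pexpr d l).
  assert (Hfe : forall x, f x = eval d (Pexpr d l) x) by (intros; rewrite eval_P; auto).
  split; auto. split. apply eul_P; auto.
  intros x Hx. rewrite <- lap_eval by auto. rewrite <- (Hlap x) by (destruct Hx; auto).
  apply lap_local; auto.
Qed.

Lemma Hak_eval d al (f : pt -> R) P x : punctured d x -> f x = eval d P x ->
  Rpower (norm d x) (2 * al) * f x = eval d (Mul (Np al) P) x.
Proof.
  intros Hx Hf. apply punct_iff in Hx. destruct Hx as [_ HN]. simpl. rewrite Hf. f_equal.
  rewrite norm_Nf, <- Rpower_sqrt by auto. rewrite Rpower_mult. f_equal. field.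
Qed.
Lemma div_nonneg x y : 0 <= x -> 0 < y -> 0 <= x / y.
Proof. intros. unfold Rdiv. apply Rmult_le_pos; auto. left. apply Rinv_0_lt_compat; auto. Qed.

Lemma fact2S p : INR (fact (2 * S p)) = INR (fact (2 * p)) * ((2 * INR p + 1) * (2 * INR p + 2)).
Proof.
  replace (2 * S p)%nat with (S (S (2 * p))) by lia.
  change (fact (S (S (2 * p)))) with (S (S (2 * p)) * (S (2 * p) * fact (2 * p)))%nat.
  rewrite !mult_INR, !S_INR, mult_INR. simpl (INR 2). ring.
Qed.

Lemma pow2S q n : q ^ (2 * S n) = q ^ (2 * n) * q ^ 2.
Proof. replace (2 * S n)%nat with (2 * n + 2)%nat by lia. apply pow_add. Qed.

Lemma step_bound a b q P : 1 < q -> 1 <= P ->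
  P * (4 * (q ^ 2 - 1)) >= Rabs a * Rabs b + 2 * (Rabs a + Rabs b) ->
  Rabs ((a - 2 * P) * (b - 2 * P)) <= (2 * P + 1) * (2 * P + 2) * q ^ 2.
Proof.
  intros Hq HP H. rewrite Rabs_mult.
  assert (Ha : Rabs (a - 2 * P) <= Rabs a + 2 * P).
  { unfold Rminus. eapply Rle_trans. apply Rabs_triang. rewrite Rabs_Ropp, (Rabs_right (2 * P)) by lra. lra. }
  assert (Hb : Rabs (b - 2 * P) <= Rabs b + 2 * P).
  { unfold Rminus. eapply Rle_trans. apply Rabs_triang. rewrite Rabs_Ropp, (Rabs_right (2 * P)) by lra. lra. }
  pose proof (Rabs_pos a). pose proof (Rabs_pos b).
  pose proof (Rabs_pos (a - 2 * P)). pose proof (Rabs_pos (b - 2 * P)).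
  eapply Rle_trans. apply Rmult_le_compat; eauto.
  set (A := Rabs a) in *. set (B := Rabs b) in *.
  assert (P * (P * (4 * (q ^ 2 - 1))) >= P * (A * B + 2 * (A + B))) by (apply Rmult_ge_compat_l; lra).
  assert (0 <= A * B) by (apply Rmult_le_pos; auto).
  assert (0 <= (P - 1) * (A * B)) by (apply Rmult_le_pos; lra).
  assert (P * (A * B) >= A * B) by lra.
  assert (q ^ 2 >= 1) by nra.
  set (Q := q ^ 2) in *.
  assert (4 * P * P * Q <= (2 * P + 1) * (2 * P + 2) * Q) by (apply Rmult_le_compat_r; nra).
  assert ((A + 2 * P) * (B + 2 * P) = 4 * P * P + A * B + 2 * P * (A + B)) by ring.
  assert (P * (P * (4 * (Q - 1))) = 4 * P * P * Q - 4 * P * P) by ring.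
  assert (P * (A * B + 2 * (A + B)) = P * (A * B) + 2 * P * (A + B)) by ring.
  lra.
Qed.

Lemma growth a b q : 1 < q -> exists C, 0 < C /\ forall p,
  Rabs (prodd p (fun i => (a - 2 * INR i) * (b - 2 * INR i))) <= C * INR (fact (2 * p)) * q ^ (2 * p).
Proof.
  intros Hq.
  set (T := fun p => Rabs (prodd p (fun i => (a - 2 * INR i) * (b - 2 * INR i)))).
  set (F := fun p => INR (fact (2 * p)) * q ^ (2 * p)).
  assert (HF : forall p, 0 < F p).
  { intros p. unfold F. apply Rmult_lt_0_compat. apply INR_fact_lt_0. apply pow_lt. lra. }
  assert (HT : forall p, 0 <= T p) by (intros; apply Rabs_pos).
  destruct (INR_unbounded ((Rabs a * Rabs b + 2 * (Rabs a + Rabs b)) / (4 * (q ^ 2 - 1)) + 1)) as [I0 HI0].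
  assert (Hq2 : 0 < 4 * (q ^ 2 - 1)) by nra.
  assert (Hnum : 0 <= Rabs a * Rabs b + 2 * (Rabs a + Rabs b)).
  { pose proof (Rabs_pos a). pose proof (Rabs_pos b). nra. }
  assert (Hdiv : 0 <= (Rabs a * Rabs b + 2 * (Rabs a + Rabs b)) / (4 * (q ^ 2 - 1))) by (apply div_nonneg; lra).
  assert (Hstep : forall p, (I0 <= p)%nat -> T (S p) <= T p * ((2 * INR p + 1) * (2 * INR p + 2) * q ^ 2)).
  { intros p Hp. unfold T. simpl prodd. rewrite Rabs_mult. apply Rmult_le_compat_l. apply Rabs_pos.
    apply le_INR in Hp. apply step_bound; auto. lra.
    apply Rle_ge. apply (Rmult_le_reg_r (/ (4 * (q ^ 2 - 1)))). apply Rinv_0_lt_compat; lra.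
    rewrite Rmult_assoc, Rinv_r by lra. fold (Rdiv (Rabs a * Rabs b + 2 * (Rabs a + Rabs b)) (4 * (q ^ 2 - 1))). lra. }
  assert (Hlarge : forall m, T (I0 + m)%nat <= (T I0 / F I0) * F (I0 + m)%nat).
  { induction m.
    - rewrite Nat.add_0_r. unfold Rdiv. rewrite Rmult_assoc, Rinv_l by (apply Rgt_not_eq, HF). lra.
    - replace (I0 + S m)%nat with (S (I0 + m)) by lia.
      eapply Rle_trans. apply Hstep. lia.
      assert (F (S (I0 + m)) = F (I0 + m)%nat * ((2 * INR (I0 + m) + 1) * (2 * INR (I0 + m) + 2) * q ^ 2)).
      { unfold F. rewrite fact2S, pow2S.
        generalize (INR (fact (2 * (I0 + m)))) (q ^ (2 * (I0 + m))). intros. ring. }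
      rewrite H. set (X := (2 * INR (I0 + m) + 1) * (2 * INR (I0 + m) + 2) * q ^ 2).
      replace (T I0 / F I0 * (F (I0 + m)%nat * X)) with (T I0 / F I0 * F (I0 + m)%nat * X) by ring.
      apply Rmult_le_compat_r; auto.
      pose proof (pos_INR (I0 + m)). unfold X. apply Rmult_le_pos; [nra|]. apply pow2_ge_0. }
  set (C := 1 + sumd (S I0) (fun j => T j / F j)).
  assert (HC0 : 0 <= sumd (S I0) (fun j => T j / F j)).
  { apply sumd_nonneg. intros j. apply div_nonneg; auto. }
  exists C. split. unfold C; lra.
  intros p. fold (T p). replace (C * INR (fact (2 * p)) * q ^ (2 * p)) with (C * F p) by (unfold F; ring).
  assert (HCF : forall j, (j <= I0)%nat -> T j / F j <= C).
  { intros j Hj. unfold C. pose proof (sumd_ge_term (S I0) (fun j => T j / F j) j). 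
    assert (T j / F j <= sumd (S I0) (fun j => T j / F j)). apply H. intros; apply div_nonneg; auto. lia. lra. }
  destruct (Nat.le_gt_cases p I0).
  - specialize (HCF p H). apply (Rmult_le_compat_r (F p)) in HCF; [|left; auto].
    unfold Rdiv in HCF. rewrite Rmult_assoc, Rinv_l in HCF by (apply Rgt_not_eq, HF). lra.
  - replace p with (I0 + (p - I0))%nat by lia. eapply Rle_trans. apply Hlarge.
    apply Rmult_le_compat_r. left; auto. apply HCF; lia.
Qed.
Lemma le_listmax l i : In i l -> (i <= fold_right Nat.max 0%nat l)%nat.
Proof. induction l; simpl; intros H; [contradiction|]. destruct H; subst; [lia|]. specialize (IHl H). lia. Qed.

Lemma abs_lt_of (u v n : R) : Rabs v < n -> Rabs (u - v) < n - Rabs v -> Rabs u < n.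
Proof. intros H1 H2. pose proof (Rabs_triang (u - v) v). replace (u - v + v) with u in H by ring. lra. Qed.

Lemma compact_bounds d K (f g : pt -> R) : compact d K -> (forall x, K x -> punctured d x) ->
  (forall x, punctured d x -> cont_at d f x) -> (forall x, punctured d x -> cont_at d g x) ->
  exists M, 0 < M /\ forall x, K x -> Nf d x < M /\ Rabs (f x) < M /\ Rabs (g x) < M.
Proof.
  intros [HKd HK] HKp Hf Hg.
  set (U := fun (n : nat) y => punctured d y /\ Nf d y < INR n /\ Rabs (f y) < INR n /\ Rabs (g y) < INR n).
  destruct (HK nat U) as [l Hl].
  - intros n x [Hp [H1 [H2 H3]]] Hx.
    destruct (punct_nbhd d x Hp) as [r [Hr Hn]].
    destruct (cont_Nf d x (INR n - Nf d x)) as [d1 [Hd1 H1']]; [lra|].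
    destruct (Hf x Hp (INR n - Rabs (f x))) as [d2 [Hd2 H2']]; [lra|].
    destruct (Hg x Hp (INR n - Rabs (g x))) as [d3 [Hd3 H3']]; [lra|].
    exists (Rmin r (Rmin d1 (Rmin d2 d3))).
    pose proof (Rmin_l r (Rmin d1 (Rmin d2 d3))). pose proof (Rmin_r r (Rmin d1 (Rmin d2 d3))).
    pose proof (Rmin_l d1 (Rmin d2 d3)). pose proof (Rmin_r d1 (Rmin d2 d3)).
    pose proof (Rmin_l d2 d3). pose proof (Rmin_r d2 d3).
    split. repeat apply Rmin_pos; auto.
    intros y Hy Hd. split; [apply Hn; auto; lra|]. split; [|split].
    + specialize (H1' y Hy ltac:(lra)). apply Rabs_def2 in H1'. lra.
    + apply (abs_lt_of _ (f x)); auto. apply H2'; auto; lra.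
    + apply (abs_lt_of _ (g x)); auto. apply H3'; auto; lra.
  - intros x Hx. destruct (INR_unbounded (Nf d x + Rabs (f x) + Rabs (g x))) as [n Hn].
    exists n. pose proof (Nf_nonneg d x). pose proof (Rabs_pos (f x)). pose proof (Rabs_pos (g x)).
    unfold U. split; auto. lra.
  - exists (INR (fold_right Nat.max 0%nat l) + 1). split. pose proof (pos_INR (fold_right Nat.max 0%nat l)). lra.
    intros x Hx. destruct (Hl x Hx) as [i [Hi [_ [H1 [H2 H3]]]]].
    apply le_listmax, le_INR in Hi. lra.
Qed.
Lemma exp_le a b : a <= b -> exp a <= exp b.
Proof. intros [H|H]. left; apply exp_increasing; auto. subst; lra. Qed.

Lemma Rpower_bound n al r0 M : 0 < r0 -> r0 ^ 2 < n -> n < M ->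
  Rpower n al <= exp (Rabs al * (Rabs (ln (r0 ^ 2)) + Rabs (ln M))).
Proof.
  intros Hr Hn HM. assert (Hr2 : 0 < r0 ^ 2) by (apply pow_lt; auto).
  unfold Rpower. apply exp_le.
  pose proof (ln_increasing _ _ Hr2 Hn). pose proof (ln_increasing n M ltac:(lra) HM).
  set (L1 := ln (r0 ^ 2)) in *. set (L2 := ln M) in *.
  assert (Rabs (ln n) <= Rabs L1 + Rabs L2).
  { apply Rabs_le. pose proof (Rle_abs L2). pose proof (Rle_abs (- L1)). rewrite Rabs_Ropp in H2.
    pose proof (Rabs_pos L1). pose proof (Rabs_pos L2). lra. }
  eapply Rle_trans. apply Rle_abs. rewrite Rabs_mult. apply Rmult_le_compat_l; auto. apply Rabs_pos.
Qed.

Lemma comp_bound (cpv n Pv al C0 A M r0 eps Fv : R) p : 0 < r0 -> 0 < eps -> r0 ^ 2 < n ->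
  Rpower n al <= A -> Rabs Pv < M -> Rabs cpv <= C0 * Fv * (1 + eps * r0) ^ (2 * p) ->
  0 <= Fv -> 0 <= C0 ->
  Rabs (cpv * (Rpower n (al - INR p) * Pv)) <= C0 * A * M * Fv * (1 / r0 + eps) ^ (2 * p).
Proof.
  intros Hr He Hn HA HP Hc HF HC.
  assert (Hr2 : 0 < r0 ^ 2) by (apply pow_lt; auto).
  assert (Hn0 : 0 < n) by lra.
  unfold Rminus. rewrite Rpower_plus, Rpower_Ropp, Rpower_pow by auto.
  assert (Hinv : / n ^ p <= / (r0 ^ 2) ^ p).
  { apply Rinv_le_contravar. apply pow_lt; auto. apply pow_incr. split; lra. }
  assert (Hq : (1 / r0 + eps) ^ (2 * p) = (1 + eps * r0) ^ (2 * p) * / (r0 ^ 2) ^ p).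
  { replace (1 / r0 + eps) with ((1 + eps * r0) * / r0) by (field; lra).
    rewrite Rpow_mult_distr, pow_inv, (pow_mult r0). auto. }
  rewrite Hq. rewrite !Rabs_mult.
  assert (0 < Rpower n al) by (unfold Rpower; apply exp_pos).
  rewrite (Rabs_right (Rpower n al)) by lra.
  rewrite (Rabs_right (/ n ^ p)) by (left; apply Rinv_0_lt_compat, pow_lt; auto).
  pose proof (Rabs_pos cpv). pose proof (Rabs_pos Pv).
  assert (0 < / n ^ p) by (apply Rinv_0_lt_compat, pow_lt; auto).
  assert (0 <= (1 + eps * r0) ^ (2 * p)) by (apply pow_le; nra).
  assert (0 <= / (r0 ^ 2) ^ p) by (left; apply Rinv_0_lt_compat, pow_lt; auto).
  replace (C0 * A * M * Fv * ((1 + eps * r0) ^ (2 * p) * / (r0 ^ 2) ^ p))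
    with ((C0 * Fv * (1 + eps * r0) ^ (2 * p)) * ((A * / (r0 ^ 2) ^ p) * M)) by ring.
  apply Rmult_le_compat; auto.
  apply Rmult_le_pos; auto. left; apply Rmult_lt_0_compat; auto.
  apply Rmult_le_compat; auto. left; apply Rmult_lt_0_compat; auto.
  apply Rmult_le_compat; auto; lra. lra.
Qed.

Lemma prodd_ext n f g : (forall i, f i = g i) -> prodd n f = prodd n g.
Proof. intros H. induction n; simpl; auto. rewrite IHn, H. auto. Qed.

Lemma cabs_le a b : cabs (a, b) <= Rabs a + Rabs b.
Proof.
  unfold cabs. simpl. rewrite <- (sqrt_Rsqr (Rabs a + Rabs b)) by (pose proof (Rabs_pos a); pose proof (Rabs_pos b); lra).
  apply sqrt_le_1. nra. apply Rle_0_sqr.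
  unfold Rsqr. pose proof (Rabs_pos a). pose proof (Rabs_pos b).
  assert (a * a = Rabs a * Rabs a) by (rewrite <- Rabs_mult; rewrite Rabs_right; nra).
  assert (b * b = Rabs b * Rabs b) by (rewrite <- Rabs_mult; rewrite Rabs_right; nra).
  nra.
Qed.
Lemma cfac_eq d kk al i : cfac d kk al i =
  (2 * al - 2 * INR i) * ((2 * al + INR d - 2 + 2 * kk) - 2 * INR i).
Proof. unfold cfac. ring. Qed.

Theorem mainTheorem2 (d k : nat) (Y : pt -> R * R) (alpha : R) :
  (2 <= d)%nat ->
  harmonic_hom_poly d k Y ->
  (exceptional d k alpha -> polyharmonic_fin d (Hak d alpha Y) (punctured d)) /\
  (~ exceptional d k alpha ->
     forall (r0 : R) (r1 : option R), 0 < r0 -> ext_lt r0 r1 ->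
       polyharmonic_inf d (Hak d alpha Y) (annulus d r0 r1) (1 / r0)).
Proof.
  intros Hd [Hre [Him Hlap]].
  destruct (poly_component d k (re Y) Hre (fun x Hx => proj1 (Hlap x Hx))) as [Pr [HPr [HEr HHr]]].
  destruct (poly_component d k (im Y) Him (fun x Hx => proj2 (Hlap x Hx))) as [Pi [HPi [HEi HHi]]].
  assert (Er : forall x, punctured d x -> re (Hak d alpha Y) x = eval d (Mul (Np alpha) Pr) x).
  { intros x Hx. apply (Hak_eval d alpha (re Y)); auto. }
  assert (Ei : forall x, punctured d x -> im (Hak d alpha Y) x = eval d (Mul (Np alpha) Pi) x).
  { intros x Hx. apply (Hak_eval d alpha (im Y)); auto. }
  assert (Sr : smooth d (re (Hak d alpha Y)) (punctured d)).
  { intros n. apply (Ck_local d n (eval d (Mul (Np alpha) Pr))). intros; symmetry; auto. apply Ck_eval. }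
  assert (Si : smooth d (im (Hak d alpha Y)) (punctured d)).
  { intros n. apply (Ck_local d n (eval d (Mul (Np alpha) Pi))). intros; symmetry; auto. apply Ck_eval. }
  assert (Lr : forall p x, punctured d x -> lap_iter d p (re (Hak d alpha Y)) x =
     cp d (INR k) alpha p * (Rpower (Nf d x) (alpha - INR p) * eval d Pr x)).
  { intros p x Hx. rewrite (lap_iter_local d p _ (eval d (Mul (Np alpha) Pr))); auto.
    apply lap_iter_formula; auto. }
  assert (Li : forall p x, punctured d x -> lap_iter d p (im (Hak d alpha Y)) x =
     cp d (INR k) alpha p * (Rpower (Nf d x) (alpha - INR p) * eval d Pi x)).
  { intros p x Hx. rewrite (lap_iter_local d p _ (eval d (Mul (Np alpha) Pi))); auto.
    apply lap_iter_formula; auto. }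
  split.
  - intros Hexc. split; [auto|split; [auto|]].
    assert (Hz : exists p, cp d (INR k) alpha p = 0).
    { destruct Hexc as [[n Hn]|[j Hj]].
      - exists (S n). apply (cp_zero _ _ _ _ n). lia. unfold cfac. rewrite Hn. ring.
      - exists (S j). apply (cp_zero _ _ _ _ j). lia. unfold cfac. rewrite Hj. field. }
    destruct Hz as [p Hp]. exists p. intros x Hx. rewrite Lr, Li, Hp by auto. split; ring.
  - intros _ r0 r1 Hr0 Hext.
    assert (Hann : forall x, annulus d r0 r1 x -> punctured d x).
    { intros x [Hx [Hn _]]. split; auto. lra. }
    split; [intros n; apply (Ck_mono d n _ (punctured d)); auto|].
    split; [intros n; apply (Ck_mono d n _ (punctured d)); auto|].
    intros K HK HKG eps Heps.
    assert (HKp : forall x, K x -> punctured d x) by auto.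
    destruct (compact_bounds d K (eval d Pr) (eval d Pi) HK HKp) as [M [HM HMb]].
    { intros x Hx. apply punct_iff in Hx. destruct Hx. apply cont_eval; auto. }
    { intros x Hx. apply punct_iff in Hx. destruct Hx. apply cont_eval; auto. }
    destruct (growth (2 * alpha) (2 * alpha + INR d - 2 + 2 * INR k) (1 + eps * r0)) as [C0 [HC0 HG]].
    { nra. }
    set (A := exp (Rabs alpha * (Rabs (ln (r0 ^ 2)) + Rabs (ln M)))).
    exists (2 * (C0 * A * M)). split.
    { assert (0 < A) by apply exp_pos. assert (0 < C0 * A) by (apply Rmult_lt_0_compat; auto).
      assert (0 < C0 * A * M) by (apply Rmult_lt_0_compat; auto). lra. }
    intros p x Hx.
    assert (Hxp : punctured d x) by auto.
    destruct (HMb x Hx) as [HN [HBr HBi]].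
    assert (Hr2 : r0 ^ 2 < Nf d x).
    { destruct (HKG x Hx) as [_ [Hn _]]. rewrite norm_Nf in Hn.
      pose proof (Nf_nonneg d x). pose proof (sqrt_sqrt (Nf d x) H).
      assert (0 < sqrt (Nf d x)) by lra. nra. }
    assert (HA : Rpower (Nf d x) alpha <= A) by (apply Rpower_bound; auto).
    assert (Hcp : Rabs (cp d (INR k) alpha p) <= C0 * INR (fact (2 * p)) * (1 + eps * r0) ^ (2 * p)).
    { unfold cp. rewrite (prodd_ext p _ (fun i => (2 * alpha - 2 * INR i) * ((2 * alpha + INR d - 2 + 2 * INR k) - 2 * INR i))).
      apply HG. intros; apply cfac_eq. }
    pose proof (INR_fact_lt_0 (2 * p)).
    eapply Rle_trans. apply cabs_le. rewrite Lr, Li by auto.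
    pose proof (comp_bound (cp d (INR k) alpha p) (Nf d x) (eval d Pr x) alpha C0 A M r0 eps (INR (fact (2 * p))) p Hr0 Heps Hr2 HA HBr Hcp ltac:(lra) ltac:(lra)).
    pose proof (comp_bound (cp d (INR k) alpha p) (Nf d x) (eval d Pi x) alpha C0 A M r0 eps (INR (fact (2 * p))) p Hr0 Heps Hr2 HA HBi Hcp ltac:(lra) ltac:(lra)).
    lra.
Qed.
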